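(* Let $r(\mathcal{C},R)$ be a reachability rule and $\mathrm{H}:=\mathrm{H}(\mathbf{G}(r(\mathcal{C},R)))$. If $\mathrm{H}'$ is a fracturable subset of $\mathrm{H}$ (in $\mathsf{DG}(\mathrm H)$), then $r(\mathcal{C},R)\preceq\ \triangleright^{0} pw\ \triangleright^{1} r(\mathcal{C},R)\ominus\mathbf{G}(\mathrm{H}')\ \triangleright^{0}\mathrm{H}'$.
   Context: Fix a countably infinite set $\mathtt{S}$ of sequents (atomic labels), a set $\mathcal{U}$ of vertices, and a non-empty finite set $\mathtt{E}$ of edge types. A g-sequent is $\mathcal{G}=(\mathcal{V},\mathcal{E},\mathcal{L})$ with $\mathcal{V}\subseteq\mathcal{U}$, $\mathcal{E}=\{\mathcal{E}_a\mid a\in\mathtt{E}\}$, $\mathcal{E}_a\subseteq\mathcal{V}\times\mathcal{V}$, $\mathcal{L}:\mathcal{V}\to\mathtt{S}$; $\mathcal U(\mathcal G)=\mathcal V$; written $\Gamma\vdash\Delta$ with $\Gamma$ the set of edge atoms $w\mathcal{E}_a u$ and $\Delta$ the set of prefixed sequents $w:S$; $\mathtt{PS}=\mathcal U\times\mathtt S$; commas denote disjoint union. Let $\overline{\mathtt E}=\{\bar a\mid a\in\mathtt E\}$, $\bar{\bar z}=z$, $\overline{x_1\cdots x_n}=\bar x_n\cdots\bar x_1$, $\varepsilon$ empty string. Paths: $\mathcal{G}\models u\xrightarrow{a}w$ iff $(u,w)\in\mathcal{E}_a$; $u\xrightarrow{\bar a}w$ iff $(w,u)\in\mathcal{E}_a$;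 $u\xrightarrow{\varepsilon}w$ iff $u=w$; $u\xrightarrow{xs}w$ iff some $v$ has $u\xrightarrow{x}v$, $v\xrightarrow{s}w$; $u\xrightarrow{\mathscr L}w$ iff $u\xrightarrow{s}w$ for some $s\in\mathscr L$. An $\mathtt E$-system is a finite set $\mathbf G$ of production rules $x\longrightarrow t$ ($x\in\mathtt E\cup\overline{\mathtt E}$) with $x\longrightarrow t\in\mathbf G$ iff $\bar x\longrightarrow\bar t\in\mathbf G$; $\mathbf G(s)=\{t\mid s\longrightarrow^*_{\mathbf G}t\}$. For $p=x\longrightarrow t$, $\bar p=\bar x\longrightarrow\bar t$; $(p,\bar p)$ is a production pair; $P(\mathbf G)$ is the set of such pairs. A sequent constraint $R\subseteq\mathtt S^n\times2^{\mathtt{PS}}$ is satisfied by $S_1,\dots,S_n,\Delta$ iff $(S_{\pi(1)},\dots,S_{\pi(n)},\Delta)\in R$ for some permutation $\pi$. A reachability rule $r(\mathcal C,R)$ has premises $\Gamma\vdash\Delta,w:S_i,u:S'_i$ ($i\in[n]$) and conclusion $\Gamma\vdash\Delta,w:S,u:S'$, where $\mathcal C=(C_1,\dots,C_n)$, $C_i=(\{w,u\},\{(w,u)\},L_i)$ with $L_i(w,u)=\mathbf G_i(a_i)$ ($a_i\in\mathtt E$, $\mathbf G_i$ an $\mathtt E$-system), the $i$-th premise satisfies $\mathcal G\models w\xrightarrow{\mathbf G_i(a_i)}u$, and $S_1,S'_1,\dots,S_n,S'_n,S,S',\Delta$ satisfy $R$. $\mathbf G(r(\mathcal C,R))=\bigcup_i\mathbf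 G_i$. Fracture: $r(\mathcal C,R)\ominus\mathbf G$ replaces each label $\mathbf G_i(a_i)$ by $(\mathbf G_i\setminus\mathbf G)(a_i)$. Horn rules: for $s=x_1\cdots x_n$, $w\mathcal E_s u$ abbreviates atoms $w\mathcal E_{x_1}v_1,\dots,v_{n-1}\mathcal E_{x_n}u$ ($v\mathcal E_{\bar a}z$ means $z\mathcal E_a v$; $w\mathcal E_\varepsilon u$ means $w=u$). Forward Horn rule $h_f$: premise $\Gamma,w\mathcal{E}_s u,w\mathcal{E}_a u\vdash\Delta$, conclusion $\Gamma,w\mathcal{E}_s u\vdash\Delta$; backward $h_b$: same with $u\mathcal E_a w$ in place of $w\mathcal E_a u$. $\mathbf{G}(h_f)=\{a\longrightarrow s,\bar a\longrightarrow\bar s\}$, $\mathbf{G}(h_b)=\{\bar a\longrightarrow s,a\longrightarrow\bar s\}$, $\mathbf G(\mathrm H)=\bigcup_{h\in\mathrm H}\mathbf G(h)$. For a pair $(p,\bar p)$ with $p=a\longrightarrow s$ (resp. $\bar a\longrightarrow s$), $\mathrm H(p,\bar p)$ is the corresponding forward (resp. backward) Horn rule; $\mathrm H(\mathbf G)=\bigcup_{(p,\bar p)\in P(\mathbf G)}\mathrm H(p,\bar p)$. Dependency graph: for distinct pairs with $p=x\longrightarrow s$, $p'=y\longrightarrow t$, $(p,\bar p)\sqsubset(p',\bar p')$ iff $s$ or $\bar s$ contains $y$; $\sqsubseteq$ its reflexive-transitive closure; $\mathsf{DG}(\mathrm H)=(\mathrm H,\sqsubseteq')$ with $h\sqsubseteq'h'$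 iff the pair of $h$ is $\sqsubseteq$ that of $h'$. $V'\subseteq V$ is fracturable in $(V,\sqsubseteq)$ iff no $v\in V'$, $v'\in V\setminus V'$ have $v\sqsubseteq v'$. The path weakening rule $pw$ has premise $\Gamma\vdash\Delta$ and conclusion $\Gamma,\Sigma\vdash\Delta$ with $\Sigma=w\mathcal E_a u$ for some $a\in\mathtt E$ and $w,u\in\mathcal U(\Gamma\vdash\Delta)$. Simulation: $\mathrm R_1\preceq\mathrm R_2$ iff whatever is derivable from given g-sequents using $\mathrm R_1$ is derivable from them using $\mathrm R_2$. An ordered rule set $\triangleright^{i_1}\mathrm R_1\cdots\triangleright^{i_k}\mathrm R_k$ ($i_j\in\{0,1\}$) is $\mathrm R_1\cup\dots\cup\mathrm R_k$ restricted to derivations that (top to bottom) first apply at least $i_1$ rules from $\mathrm R_1$, then at least $i_2$ rules from $\mathrm R_2$, etc.; singletons written by their element. *)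

(* Defs.v *)
From Stdlib Require Import List Permutation Relations.
Import ListNotations.

Set Implicit Arguments.

Section GSeq.
Context {U S E : Type}.

(* a letter (a,false) is a ∈ E, (a,true) is ā ∈ Ē *)
Definition letter := (E * bool)%type.
Definition bar_letter (x : letter) : letter := (fst x, negb (snd x)).
Definition bar_str (s : list letter) : list letter := rev (map bar_letter s).

Definition production := (letter * list letter)%type.
Definition bar_prod (p : production) : production := (bar_letter (fst p), bar_str (snd p)).

Definition Esystem (G : production -> Prop) : Prop :=
  (exists l : list production, forall p, G p -> In p l) /\
  (forall p, G p <-> G (bar_prod p)).

Definition rw_step (G : production -> Prop) (s t : list letter) : Prop :=
  exists s1 s2 x t0, s = s1 ++ x :: s2 /\ t = s1 ++ t0 ++ s2 /\ G (x, t0).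
Definition lang (G : production -> Prop) (s : list letter) : list letter -> Prop :=
  fun t => clos_refl_trans (list letter) (rw_step G) s t.

(* Gam a w u  <->  the edge atom w E_a u is in Γ  ((w,u) ∈ E_a);
   Del w T    <->  the prefixed sequent w:T is in Δ  (w ∈ V and L(w) = T). *)
Record gseq := mkG {
  Gam : E -> U -> U -> Prop;
  Del : U -> S -> Prop;
  Del_fun : forall w T1 T2, Del w T1 -> Del w T2 -> T1 = T2;
  Gam_dom : forall a w u, Gam a w u -> (exists T, Del w T) /\ (exists T, Del u T)
}.

Definition inV (G : gseq) (w : U) : Prop := exists T, Del G w T.

Definition edge_step (Gm : E -> U -> U -> Prop) (u : U) (x : letter) (v : U) : Prop :=
  if snd x then Gm (fst x) v u else Gm (fst x) u v.
Fixpoint gpath (Gm : E -> U -> U -> Prop) (u : U) (s : list letter) (w : U) : Prop :=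
  match s with
  | [] => u = w
  | x :: s' => exists v, edge_step Gm u x v /\ gpath Gm v s' w
  end.
Definition path_in (G : gseq) (u : U) (L : list letter -> Prop) (w : U) : Prop :=
  exists s, L s /\ gpath (Gam G) u s w.

Definition rule := list gseq -> gseq -> Prop.

Definition Rsat (R : list S -> (U -> S -> Prop) -> Prop) (l : list S) (D : U -> S -> Prop) : Prop :=
  exists l', Permutation l l' /\ R l' D.

(* the reachability rule r(C,R), with C_i labelled by Gs i (a i), i < n *)
Definition reach_rule (n : nat) (a : nat -> E) (Gs : nat -> production -> Prop)
    (R : list S -> (U -> S -> Prop) -> Prop) : rule :=
  fun prems C =>
    exists (Delta : U -> S -> Prop) (w u : U) (Sw Su : S) (Sp Sp' : nat -> S),
      (* conclusion  Γ ⊢ Δ, w:S, u:S'  (disjoint union) *)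
      ~ Delta w Sw /\ ~ Delta u Su /\ (w, Sw) <> (u, Su) /\
      (forall v T, Del C v T <-> Delta v T \/ (v = w /\ T = Sw) \/ (v = u /\ T = Su)) /\
      length prems = n /\
      (forall i P, nth_error prems i = Some P ->
         (* i-th premise  Γ ⊢ Δ, w:S_i, u:S'_i *)
         (forall b x y, Gam P b x y <-> Gam C b x y) /\
         ~ Delta w (Sp i) /\ ~ Delta u (Sp' i) /\ (w, Sp i) <> (u, Sp' i) /\
         (forall v T, Del P v T <-> Delta v T \/ (v = w /\ T = Sp i) \/ (v = u /\ T = Sp' i)) /\
         path_in P w (lang (Gs i) [(a i, false)]) u) /\
      Rsat R (flat_map (fun i => [Sp i; Sp' i]) (seq 0 n) ++ [Sw; Su]) Delta.

Definition Grule (n : nat) (Gs : nat -> production -> Prop) : production -> Prop :=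
  fun p => exists i, i < n /\ Gs i p.

Definition fracture (n : nat) (a : nat -> E) (Gs : nat -> production -> Prop)
    (R : list S -> (U -> S -> Prop) -> Prop) (G : production -> Prop) : rule :=
  reach_rule n a (fun i p => Gs i p /\ ~ G p) R.

Definition pw : rule :=
  fun prems C => exists P, prems = [P] /\
    exists a w u, inV P w /\ inV P u /\ ~ Gam P a w u /\
      (forall b x y, Gam C b x y <-> Gam P b x y \/ (b = a /\ x = w /\ y = u)) /\
      (forall v T, Del C v T <-> Del P v T).

Definition horn_f (a : E) (s : list letter) : rule :=
  fun prems C => exists P, prems = [P] /\
    exists w u, gpath (Gam C) w s u /\ ~ Gam C a w u /\
      (forall b x y, Gam P b x y <-> Gam C b x y \/ (b = a /\ x = w /\ y = u)) /\
      (forall v T, Del P v T <-> Del C v T).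

Definition horn_b (a : E) (s : list letter) : rule :=
  fun prems C => exists P, prems = [P] /\
    exists w u, gpath (Gam C) w s u /\ ~ Gam C a u w /\
      (forall b x y, Gam P b x y <-> Gam C b x y \/ (b = a /\ x = u /\ y = w)) /\
      (forall v T, Del P v T <-> Del C v T).

Definition horn_of_prod (p : production) : rule :=
  if snd (fst p) then horn_b (fst (fst p)) (snd p) else horn_f (fst (fst p)) (snd p).

Definition horn_set (G : production -> Prop) : rule :=
  fun prems C => exists p, G p /\ horn_of_prod p prems C.

Definition dep_prec (p q : production) : Prop :=
  q <> p /\ q <> bar_prod p /\ (In (fst q) (snd p) \/ In (fst q) (bar_str (snd p))).
Definition dep_le (G : production -> Prop) (p q : production) : Prop :=
  clos_refl_trans production (fun x y => G x /\ G y /\ dep_prec x y) p q.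
(* H' (given by the productions Hp = G(H') of its pairs) is fracturable in DG(H(G)) *)
Definition fracturable (G Hp : production -> Prop) : Prop :=
  forall p q, Hp p -> G q -> ~ Hp q -> ~ dep_le G p q.

Inductive derivn (R : rule) (base : gseq -> Prop) : nat -> gseq -> Prop :=
| derivn_base : forall G, base G -> derivn R base 0 G
| derivn_step : forall prems C ns, R prems C -> Forall2 (derivn R base) ns prems ->
    derivn R base (Datatypes.S (list_sum ns)) C.

Definition stage (blk : nat * rule) (base : gseq -> Prop) : gseq -> Prop :=
  fun G => exists k, fst blk <= k /\ derivn (snd blk) base k G.

(* ▷^{i1} R1 ... ▷^{ik} Rk, read top to bottom *)
Definition ord_deriv (blocks : list (nat * rule)) (base : gseq -> Prop) : gseq -> Prop :=
  fold_left (fun b blk => stage blk b) blocks base.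

Definition simulates (r : rule) (blocks : list (nat * rule)) : Prop :=
  forall prems C, r prems C -> ord_deriv blocks (fun G => In G prems) C.

End GSeq.

(* Main.v *)
Require Import Defs.
From Stdlib Require Import List Permutation Relations.
From Stdlib Require Import Classical Lia FunctionalExtensionality PropExtensionality ProofIrrelevance.
Import ListNotations.

Lemma gseq_ext {U S E : Type} (D C : @gseq U S E) :
  (forall b x y, Gam D b x y <-> Gam C b x y) ->
  (forall v T, Del D v T <-> Del C v T) -> D = C.
Proof.
  destruct D as [g1 d1 f1 h1], C as [g2 d2 f2 h2]; simpl; intros H1 H2.
  assert (g1 = g2).
  { extensionality b; extensionality x; extensionality y; apply propositional_extensionality; auto. }
  assert (d1 = d2).
  { extensionality v; extensionality T; apply propositional_extensionality; auto. }
  subst. f_equal; apply proof_irrelevance.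
Qed.

Lemma gpath_mono {U E : Type} (G1 G2 : E -> U -> U -> Prop) :
  (forall b x y, G1 b x y -> G2 b x y) ->
  forall s u w, gpath G1 u s w -> gpath G2 u s w.
Proof.
  intros H s; induction s as [|x s IH]; simpl; intros u w Hp; auto.
  destruct Hp as [v [He Hp]]; exists v; split; auto.
  unfold edge_step in *; destruct (snd x); auto.
Qed.

Lemma gpath_app {U E : Type} (G : E -> U -> U -> Prop) s1 s2 u m w :
  gpath G u s1 m -> gpath G m s2 w -> gpath G u (s1 ++ s2) w.
Proof.
  revert u; induction s1 as [|x s IH]; simpl; intros u H1 H2.
  - subst; auto.
  - destruct H1 as [v [He Hp]]; exists v; split; eauto.
Qed.

Lemma gpath_split {U E : Type} (G : E -> U -> U -> Prop) s1 s2 u w :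
  gpath G u (s1 ++ s2) w -> exists m, gpath G u s1 m /\ gpath G m s2 w.
Proof.
  revert u; induction s1 as [|x s IH]; simpl; intros u H.
  - exists u; auto.
  - destruct H as [v [He Hp]]. destruct (IH _ Hp) as [m [H1 H2]].
    exists m; split; eauto.
Qed.

Lemma gpath_V {U E : Type} (G : E -> U -> U -> Prop) (Vx : U -> Prop) :
  (forall b x y, G b x y -> Vx x /\ Vx y) ->
  forall s u w, Vx u -> gpath G u s w -> Vx w.
Proof.
  intros HG s; induction s as [|x s IH]; simpl; intros u w Hu Hp.
  - subst; auto.
  - destruct Hp as [v [He Hp]]. apply (IH v); auto.
    unfold edge_step in He; destruct (snd x); apply HG in He; tauto.
Qed.

Lemma rw_app_r {E : Type} (G : @production E -> Prop) s t r :
  rw_step G s t -> rw_step G (s ++ r) (t ++ r).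
Proof.
  intros [s1 [s2 [x [t0 [H1 [H2 H3]]]]]]; subst.
  exists s1, (s2 ++ r), x, t0; repeat split; auto; repeat rewrite <- app_assoc; simpl; auto.
Qed.

Lemma rw_app_l {E : Type} (G : @production E -> Prop) s t r :
  rw_step G s t -> rw_step G (r ++ s) (r ++ t).
Proof.
  intros [s1 [s2 [x [t0 [H1 [H2 H3]]]]]]; subst.
  exists (r ++ s1), s2, x, t0; repeat split; auto; repeat rewrite <- app_assoc; simpl; auto.
Qed.

Lemma lang_app {E : Type} (G : @production E -> Prop) s1 t1 s2 t2 :
  lang G s1 t1 -> lang G s2 t2 -> lang G (s1 ++ s2) (t1 ++ t2).
Proof.
  intros H1 H2. apply rt_trans with (t1 ++ s2).
  - induction H1. apply rt_step; apply rw_app_r; auto. apply rt_refl. eapply rt_trans; eauto.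
  - induction H2. apply rt_step; apply rw_app_l; auto. apply rt_refl. eapply rt_trans; eauto.
Qed.

Inductive DT {E : Type} (G : @production E -> Prop) : @letter E -> list (@letter E) -> Prop :=
| DT_refl : forall x, DT G x [x]
| DT_prod : forall x t0 t, G (x, t0) -> DTL G t0 t -> DT G x t
with DTL {E : Type} (G : @production E -> Prop) : list (@letter E) -> list (@letter E) -> Prop :=
| DTL_nil : DTL G [] []
| DTL_cons : forall x t s u, DT G x t -> DTL G s u -> DTL G (x :: s) (t ++ u).

Scheme DT_mut := Induction for DT Sort Prop
with DTL_mut := Induction for DTL Sort Prop.

Lemma DTL_refl {E : Type} (G : @production E -> Prop) s : DTL G s s.
Proof.
  induction s as [|x s IH]. constructor.
  change (x :: s) with ([x] ++ s) at 2. constructor; auto. constructor.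
Qed.

Lemma split_app3 {A : Type} (t u t1 t2 : list A) (y : A) :
  t ++ u = t1 ++ y :: t2 ->
  (exists t2', t = t1 ++ y :: t2' /\ t2 = t2' ++ u) \/
  (exists u1, u = u1 ++ y :: t2 /\ t1 = t ++ u1).
Proof.
  intro H. apply app_eq_app in H. destruct H as [l [[H1 H2]|[H1 H2]]].
  - destruct l as [|z l].
    + right. exists []. simpl in *. rewrite app_nil_r in *. subst; auto.
    + left. simpl in H2. injection H2; intros; subst. exists l; auto.
  - right. exists l; subst; auto.
Qed.

Lemma DT_step {E : Type} (G : @production E -> Prop) :
  (forall x t, DT G x t -> forall t1 y t2 t0, t = t1 ++ y :: t2 -> G (y, t0) -> DT G x (t1 ++ t0 ++ t2)) /\
  (forall s t, DTL G s t -> forall t1 y t2 t0, t = t1 ++ y :: t2 -> G (y, t0) -> DTL G s (t1 ++ t0 ++ t2)).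
Proof.
  split; [apply (DT_mut E G (fun x t _ => forall t1 y t2 t0, t = t1 ++ y :: t2 -> G (y, t0) -> DT G x (t1 ++ t0 ++ t2)) (fun s t _ => forall t1 y t2 t0, t = t1 ++ y :: t2 -> G (y, t0) -> DTL G s (t1 ++ t0 ++ t2)))
   | apply (DTL_mut E G (fun x t _ => forall t1 y t2 t0, t = t1 ++ y :: t2 -> G (y, t0) -> DT G x (t1 ++ t0 ++ t2)) (fun s t _ => forall t1 y t2 t0, t = t1 ++ y :: t2 -> G (y, t0) -> DTL G s (t1 ++ t0 ++ t2)))].
  all: intros.
  all: try (match goal with H : [_] = _ ++ _ :: _ |- _ =>
      destruct t1 as [|z t1]; simpl in H; injection H; intros;
      [subst; simpl; rewrite app_nil_r; econstructor; eauto; apply DTL_refl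
      | destruct t1; discriminate] end).
  all: try (econstructor; eauto; fail).
  all: try (match goal with H : [] = _ ++ _ :: _ |- _ => destruct t1; discriminate end).
  all: match goal with H : _ ++ _ = _ ++ _ :: _ |- _ =>
      destruct (split_app3 _ _ _ _ _ H) as [[t2' [Ha Hb]]|[u1 [Ha Hb]]]; subst end.
  all: try (replace (t1 ++ t0 ++ t2' ++ u) with ((t1 ++ t0 ++ t2') ++ u) by (rewrite <- !app_assoc; auto);
            constructor; eauto; fail).
  all: rewrite <- !app_assoc; constructor; eauto.
Qed.

Lemma lang_DTL {E : Type} (G : @production E -> Prop) s t : lang G s t -> DTL G s t.
Proof.
  intro H. apply clos_rt_rtn1 in H. induction H. apply DTL_refl.
  destruct H as [t1 [t2 [yy [t0 [H1 [H2 H3]]]]]]; subst.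
  eapply (proj2 (DT_step G)); eauto.
Qed.

Definition addE {U E : Type} (Gm : E -> U -> U -> Prop) (L : list (E * U * U)) : E -> U -> U -> Prop :=
  fun b x y => Gm b x y \/ In (b, x, y) L.

Definition just {U E : Type} (Hp : @production E -> Prop) (Gm : E -> U -> U -> Prop) (e : E * U * U) : Prop :=
  match e with (b, x, y) =>
    exists t, (Hp ((b, false), t) /\ gpath Gm x t y) \/ (Hp ((b, true), t) /\ gpath Gm y t x) end.

Inductive good {U E : Type} (Hp : @production E -> Prop) (Gm : E -> U -> U -> Prop) : list (E * U * U) -> Prop :=
| good_nil : good Hp Gm []
| good_cons : forall e L, good Hp Gm L -> just Hp (addE Gm L) e -> good Hp Gm (e :: L).

Definition edgesV {U E : Type} (Vx : U -> Prop) (L : list (E * U * U)) : Prop :=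
  forall b x y, In (b, x, y) L -> Vx x /\ Vx y.

Lemma just_mono {U E : Type} Hp (G1 G2 : E -> U -> U -> Prop) e :
  (forall b x y, G1 b x y -> G2 b x y) -> just Hp G1 e -> just Hp G2 e.
Proof.
  destruct e as [[b x] y]; unfold just; intros H [t [[H1 H2]|[H1 H2]]]; exists t;
  [left|right]; split; auto; eapply gpath_mono; eauto.
Qed.

Lemma good_mono {U E : Type} Hp (G1 G2 : E -> U -> U -> Prop) L :
  (forall b x y, G1 b x y -> G2 b x y) -> good Hp G1 L -> good Hp G2 L.
Proof.
  intros H Hg; induction Hg as [|e L Hg IH Hj]; constructor; auto.
  revert Hj; apply just_mono. unfold addE; intros b x y [?|?]; auto.
Qed.

Lemma good_app {U E : Type} Hp (Gm : E -> U -> U -> Prop) L1 L2 :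
  good Hp Gm L1 -> good Hp (addE Gm L1) L2 -> good Hp Gm (L2 ++ L1).
Proof.
  intros H1 H2; induction H2 as [|e L Hg IH Hj]; simpl; auto. constructor; auto.
  revert Hj; apply just_mono. unfold addE; intros b x y. rewrite in_app_iff. tauto.
Qed.

Lemma edgesV_app {U E : Type} (Vx : U -> Prop) (L1 L2 : list (E * U * U)) :
  edgesV Vx L1 -> edgesV Vx L2 -> edgesV Vx (L1 ++ L2).
Proof. unfold edgesV; intros H1 H2 b x y H; apply in_app_iff in H; destruct H; eauto. Qed.

Lemma addE_app_l {U E : Type} (Gm : E -> U -> U -> Prop) L1 L2 b x y :
  addE Gm L1 b x y -> addE Gm (L2 ++ L1) b x y.
Proof. unfold addE; rewrite in_app_iff; tauto. Qed.
Lemma addE_app_r {U E : Type} (Gm : E -> U -> U -> Prop) L1 L2 b x y :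
  addE Gm L2 b x y -> addE Gm (L2 ++ L1) b x y.
Proof. unfold addE; rewrite in_app_iff; tauto. Qed.


Lemma key {U E : Type} (Hp G : @production E -> Prop) (Gm : E -> U -> U -> Prop) (Vx : U -> Prop)
  (HGm : forall b x y, Gm b x y -> Vx x /\ Vx y)
  (Hcl : forall x t0 y, Hp (x, t0) -> In y t0 -> forall t1, G (y, t1) -> Hp (y, t1)) :
  forall x t, DT G x t -> forall v1 v2, Vx v1 -> Vx v2 -> gpath Gm v1 t v2 ->
    exists L, good Hp Gm L /\ edgesV Vx L /\
      (exists t', lang (fun p => G p /\ ~ Hp p) [x] t' /\ gpath (addE Gm L) v1 t' v2) /\
      ((forall t1, G (x, t1) -> Hp (x, t1)) -> edge_step (addE Gm L) v1 x v2).
Proof.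
  apply (DT_mut E G
    (fun x t _ => forall v1 v2, Vx v1 -> Vx v2 -> gpath Gm v1 t v2 ->
    exists L, good Hp Gm L /\ edgesV Vx L /\
      (exists t', lang (fun p => G p /\ ~ Hp p) [x] t' /\ gpath (addE Gm L) v1 t' v2) /\
      ((forall t1, G (x, t1) -> Hp (x, t1)) -> edge_step (addE Gm L) v1 x v2))
    (fun s t _ => forall v1 v2, Vx v1 -> Vx v2 -> gpath Gm v1 t v2 ->
    exists L, good Hp Gm L /\ edgesV Vx L /\
      (exists t', lang (fun p => G p /\ ~ Hp p) s t' /\ gpath (addE Gm L) v1 t' v2) /\
      ((forall y, In y s -> forall t1, G (y, t1) -> Hp (y, t1)) -> gpath (addE Gm L) v1 s v2))).
  -
    intros x v1 v2 H1 H2 Hp0. exists []. split; [constructor|]. split; [intros ? ? ? []|].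
    assert (Hg : gpath (addE Gm []) v1 [x] v2) by (apply (gpath_mono Gm); [unfold addE; auto | exact Hp0]).
    split. exists [x]; split; auto. apply rt_refl.
    intros _. destruct Hg as [v [He Hv]]; simpl in Hv; subst; auto.
  -
    intros x t0 t HG d IH v1 v2 H1 H2 Hpa.
    destruct (IH v1 v2 H1 H2 Hpa) as [L [Hg [HV [[t' [Hl Ht']] Hall]]]].
    destruct (classic (Hp (x, t0))) as [Hx|Hx].
    + assert (Hpath : gpath (addE Gm L) v1 t0 v2) by (apply Hall; intros; eapply Hcl; eauto).
      destruct x as [b bb].
      set (e := if bb then (b, v2, v1) else (b, v1, v2)).
      assert (Hedge : edge_step (addE Gm (e :: L)) v1 (b, bb) v2).
      { unfold edge_step, e, addE; simpl; destruct bb; simpl; auto. }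
      exists (e :: L). split; [|split; [|split]].
      * constructor; auto. unfold e; destruct bb; simpl; exists t0; auto.
      * intros b' x' y' Hin; destruct Hin as [Hin|Hin]; [|eauto].
        unfold e in Hin; destruct bb; injection Hin; intros; subst; auto.
      * exists [(b, bb)]; split; [apply rt_refl|].
        exists v2; split; simpl; auto.
      * auto.
    + exists L. split; auto. split; auto. split.
      * exists t'; split; auto. eapply rt_trans; [|exact Hl]. apply rt_step.
        exists [], [], x, t0; simpl; rewrite app_nil_r; auto.
      * intro Hh; exfalso; auto.
  -
    intros v1 v2 H1 H2 Hpa. simpl in Hpa; subst. exists []. split; [constructor|].
    split; [intros ? ? ? []|]. split. exists []; split; simpl; auto. apply rt_refl.
    simpl; auto.
  -
    intros x t s u d IH1 dl IH2 v1 v2 H1 H2 Hpa.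
    destruct (gpath_split _ _ _ _ _ Hpa) as [m [Hp1 Hp2]].
    assert (Hm : Vx m) by (apply (gpath_V Gm Vx HGm t v1 m H1 Hp1)).
    destruct (IH1 v1 m H1 Hm Hp1) as [L1 [Hg1 [HV1 [[t1' [Hl1 Ht1]] Hall1]]]].
    destruct (IH2 m v2 Hm H2 Hp2) as [L2 [Hg2 [HV2 [[t2' [Hl2 Ht2]] Hall2]]]].
    exists (L2 ++ L1). split; [|split; [|split]].
    + apply good_app; auto. revert Hg2; apply good_mono. intros; unfold addE; auto.
    + apply edgesV_app; auto.
    + exists (t1' ++ t2'). split.
      * change (x :: s) with ([x] ++ s). apply lang_app; auto.
      * apply gpath_app with m.
        -- revert Ht1; apply gpath_mono. intros; apply addE_app_l; auto.
        -- revert Ht2; apply gpath_mono. intros; apply addE_app_r; auto.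
    + intros Hh. exists m; split.
      * assert (He : edge_step (addE Gm L1) v1 x m) by (apply Hall1; apply Hh; simpl; auto).
        unfold edge_step in *; destruct (snd x); apply addE_app_l; auto.
      * eapply gpath_mono; [|apply Hall2; intros; apply Hh; simpl; auto].
        intros; apply addE_app_r; auto.
Qed.

Definition mkAdd {U S E : Type} (P : @gseq U S E) (L : list (E * U * U)) : @gseq U S E.
Proof.
  refine (@mkG U S E (fun b x y => Gam P b x y \/ (In (b, x, y) L /\ inV P x /\ inV P y)) (Del P) (Del_fun P) _).
  intros b x y [H|[_ [H1 H2]]]; [apply (Gam_dom P _ _ _ H) | split; auto].
Defined.

Lemma mkAdd_nil {U S E : Type} (P : @gseq U S E) : mkAdd P [] = P.
Proof. apply gseq_ext; simpl; intros; tauto. Qed.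

Lemma mkAdd_skip {U S E : Type} (P : @gseq U S E) L b x y :
  Gam (mkAdd P L) b x y \/ ~ (inV P x /\ inV P y) -> mkAdd P ((b, x, y) :: L) = mkAdd P L.
Proof.
  intro H. apply gseq_ext; simpl; [|tauto]. intros b' x' y'. split; [|tauto].
  intros [H1|[[H2|H2] H3]]; auto.
  injection H2; intros; subst. simpl in H. tauto.
Qed.

Lemma pw_lemma {U S E : Type} (base : @gseq U S E -> Prop) P L :
  base P -> exists k, derivn pw base k (mkAdd P L).
Proof.
  intro HP. induction L as [|[[b x] y] L IH].
  - exists 0. rewrite mkAdd_nil. constructor; auto.
  - destruct IH as [k Hk].
    destruct (classic (Gam (mkAdd P L) b x y \/ ~ (inV P x /\ inV P y))) as [H|H].
    + rewrite mkAdd_skip; eauto.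
    + exists (Datatypes.S (list_sum [k])). apply derivn_step with (prems := [mkAdd P L]).
      * exists (mkAdd P L); split; auto. exists b, x, y.
        apply not_or_and in H; destruct H as [H1 H2]; apply NNPP in H2; destruct H2.
        split; [auto|split; [auto|split; [auto|split]]].
        -- simpl; intros b' x' y'. split.
           ++ intros [H4|[[H4|H4] H5]]; [tauto| injection H4; intros; subst; tauto | tauto].
           ++ intros [H4|[-> [-> ->]]]; [tauto | right; split; [left; reflexivity| auto]].
        -- simpl; tauto.
      * constructor; auto.
Qed.

Lemma horn_lemma {U S E : Type} (Hp : @production E -> Prop) (C : @gseq U S E) L :
  good Hp (Gam C) L -> edgesV (inV C) L ->
  forall base k0, derivn (horn_set Hp) base k0 (mkAdd C L) -> exists k, derivn (horn_set Hp) base k C.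
Proof.
  intro Hg; induction Hg as [|[[b x] y] L Hg IH Hj]; intros HV base k0 Hd.
  - rewrite mkAdd_nil in Hd; eauto.
  - assert (HV' : edgesV (inV C) L) by (intros b0 x0 y0 Hin; apply (HV b0 x0 y0); simpl; auto).
    destruct (HV b x y (or_introl eq_refl)) as [Vx Vy].
    assert (Hmono : forall b0 x0 y0, addE (Gam C) L b0 x0 y0 -> Gam (mkAdd C L) b0 x0 y0).
    { unfold addE; simpl; intros b0 x0 y0 [?|?]; auto. right; split; auto. apply (HV' b0 x0 y0); auto. }
    destruct (classic (Gam (mkAdd C L) b x y)) as [H|H].
    + rewrite mkAdd_skip in Hd; eauto.
    + apply (IH HV' base (Datatypes.S (list_sum [k0]))).
      apply derivn_step with (prems := [mkAdd C ((b, x, y) :: L)]); [|constructor; auto].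
      unfold just in Hj. destruct Hj as [t [[Hh Hpath]|[Hh Hpath]]].
      * exists ((b, false), t); split; auto. unfold horn_of_prod; simpl.
        exists (mkAdd C ((b, x, y) :: L)); split; auto. exists x, y.
        split; [eapply gpath_mono; eauto|split; auto]. split.
        -- simpl; intros b' x' y'. split.
           ++ intros [H4|[[H4|H4] H5]]; [tauto| injection H4; intros; subst; tauto | tauto].
           ++ intros [H4|[-> [-> ->]]]; [tauto | right; split; [left; reflexivity| auto]].
        -- simpl; tauto.
      * exists ((b, true), t); split; auto. unfold horn_of_prod; simpl.
        exists (mkAdd C ((b, x, y) :: L)); split; auto. exists y, x.
        split; [eapply gpath_mono; eauto|split; auto]. split.
        -- simpl; intros b' x' y'. split.
           ++ intros [H4|[[H4|H4] H5]]; [tauto| injection H4; intros; subst; tauto | tauto].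
           ++ intros [H4|[-> [-> ->]]]; [tauto | right; split; [left; reflexivity| auto]].
        -- simpl; tauto.
Qed.

Lemma collect {U E : Type} (Hp : @production E -> Prop) (Gm : E -> U -> U -> Prop) (Vx : U -> Prop)
  (Q : nat -> (E -> U -> U -> Prop) -> Prop)
  (Qmono : forall i (G1 G2 : E -> U -> U -> Prop), (forall b x y, G1 b x y -> G2 b x y) -> Q i G1 -> Q i G2) :
  forall n, (forall i, i < n -> exists L, good Hp Gm L /\ edgesV Vx L /\ Q i (addE Gm L)) ->
  exists L, good Hp Gm L /\ edgesV Vx L /\ forall i, i < n -> Q i (addE Gm L).
Proof.
  induction n as [|n IH]; intros H.
  - exists []; split; [constructor|split; [intros ? ? ? []|intros; exfalso; inversion H0]].
  - destruct IH as [L1 [G1 [V1 Q1]]]. intros; apply H; auto.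
    destruct (H n (le_n _)) as [L2 [G2 [V2 Q2]]].
    exists (L2 ++ L1); split; [|split].
    + apply good_app; auto. revert G2; apply good_mono. unfold addE; auto.
    + apply edgesV_app; auto.
    + intros i Hi. inversion Hi; subst.
      * revert Q2; apply Qmono. intros; apply addE_app_r; auto.
      * eapply Qmono; [|apply Q1; auto]. intros; apply addE_app_l; auto.
Qed.

Lemma DTL_single {E : Type} (G : @production E -> Prop) x s : DTL G [x] s -> DT G x s.
Proof.
  intro H. inversion H as [|x0 t s0 u0 Hd Hdl]. inversion Hdl. rewrite app_nil_r; auto.
Qed.

Lemma F2_lemma {U S E : Type} (Rr : @rule U S E) (base : @gseq U S E -> Prop) (f : @gseq U S E -> @gseq U S E) l :
  (forall P, In P l -> derivn Rr base 0 (f P)) ->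
  Forall2 (derivn Rr base) (map (fun _ => 0) (map f l)) (map f l).
Proof.
  induction l as [|P l IH]; intros H; simpl; constructor; [apply H; simpl; auto|].
  apply IH; intros; apply H; simpl; auto.
Qed.

Theorem mainTheorem9
  (U S E : Type)
  (HS : exists f : nat -> S, (forall x y, f x = f y -> x = y) /\ (forall s, exists k, f k = s))
  (HEfin : exists l : list E, forall a, In a l) (HEne : inhabited E)
  (n : nat) (a : nat -> E) (Gs : nat -> @production E -> Prop)
  (HGs : forall i, i < n -> Esystem (Gs i))
  (R : list S -> (U -> S -> Prop) -> Prop)
  (Hp : @production E -> Prop)
  (Hsub : forall p, Hp p -> Grule n Gs p)
  (Hpair : forall p, Hp p -> Hp (bar_prod p))
  (Hfrac : fracturable (Grule n Gs) Hp) :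
  simulates (@reach_rule U S E n a Gs R)
    [(0, @pw U S E); (1, @fracture U S E n a Gs R Hp); (0, @horn_set U S E Hp)].
Proof.
  intros prems C Hr.
  destruct Hr as (Delta & w & u & Sw & Su & Sp & Sp' & Hw & Hu & Hne & HDel & Hlen & Hprem & HR).
  assert (Hcl : forall i, i < n -> forall x t0 y, Hp (x, t0) -> In y t0 -> forall t1, Gs i (y, t1) -> Hp (y, t1)).
  { intros i Hi x t0 y Hx Hy t1 Hq. apply NNPP; intro Hn.
    apply (Hfrac (x, t0) (y, t1) Hx (ex_intro _ i (conj Hi Hq)) Hn).
    apply rt_step. split; [apply Hsub; auto|split; [exists i; auto|]].
    split; [intro E1; rewrite E1 in Hn; auto|split; [intro E1; rewrite E1 in Hn; auto|]].
    left; simpl; auto. }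
  assert (HinvP : forall i P v, nth_error prems i = Some P -> (inV P v <-> inV C v)).
  { intros i P v HP. destruct (Hprem i P HP) as (_ & _ & _ & _ & HD & _).
    unfold inV; split; intros [T HT].
    - apply HD in HT. destruct HT as [HT|[[-> ->]|[-> ->]]].
      + exists T; apply HDel; auto.
      + exists Sw; apply HDel; auto.
      + exists Su; apply HDel; auto.
    - apply HDel in HT. destruct HT as [HT|[[-> ->]|[-> ->]]].
      + exists T; apply HD; auto.
      + exists (Sp i); apply HD; auto.
      + exists (Sp' i); apply HD; auto. }
  assert (Vw : inV C w) by (exists Sw; apply HDel; auto).
  assert (Vu : inV C u) by (exists Su; apply HDel; auto).
  destruct (collect Hp (Gam C) (inV C)
     (fun i Gm => exists t', lang (fun p => Gs i p /\ ~ Hp p) [(a i, false)] t' /\ gpath Gm w t' u))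
     with (n := n) as [Lall [Hg [HV HQ]]].
  { intros i G1 G2 H12 [t' [H1 H2]]; exists t'; split; auto; revert H2; apply gpath_mono; auto. }
  { intros i Hi.
    assert (HP : exists P, nth_error prems i = Some P).
    { destruct (nth_error prems i) eqn:Eq; eauto. apply nth_error_None in Eq; lia. }
    destruct HP as [P HP].
    destruct (Hprem i P HP) as (HGam & _ & _ & _ & _ & [s [Hl Hgp]]).
    apply lang_DTL, DTL_single in Hl.
    destruct (key Hp (Gs i) (Gam C) (inV C) (Gam_dom C) (Hcl i Hi) _ _ Hl w u Vw Vu) as [L [G1 [V1 [Q1 _]]]].
    { revert Hgp; apply gpath_mono. intros; apply HGam; auto. }
    exists L; auto. }
  simpl. unfold stage; simpl.
  set (prems' := map (fun P => mkAdd P Lall) prems).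
  assert (Hfr : fracture n a Gs R Hp prems' (mkAdd C Lall)).
  { unfold fracture, reach_rule.
    exists Delta, w, u, Sw, Su, Sp, Sp'.
    split; auto. split; auto. split; auto. split; [simpl; auto|].
    split; [unfold prems'; rewrite length_map; auto|].
    split; auto.
    intros i P' HP'. unfold prems' in HP'. rewrite nth_error_map in HP'.
    destruct (nth_error prems i) as [P|] eqn:HP; simpl in HP'; [|discriminate].
    injection HP'; intros; subst P'.
    destruct (Hprem i P HP) as (HGam & H1 & H2 & H3 & HD & _).
    assert (Hi : i < n) by (rewrite <- Hlen; apply nth_error_Some; rewrite HP; discriminate).
    split; [|split; [auto|split; [auto|split; [auto|split; [simpl; auto|]]]]].
    - simpl; intros b x y. rewrite (HGam b x y), (HinvP i P x HP), (HinvP i P y HP). tauto.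
    - destruct (HQ i Hi) as [t' [Hl Hgp]]. exists t'; split; auto.
      revert Hgp; apply gpath_mono. unfold addE; simpl; intros b x y [Hx|Hx].
      + left; apply HGam; auto.
      + right; split; auto. destruct (HV b x y Hx). rewrite (HinvP i P x HP), (HinvP i P y HP); auto. }
  assert (HF2 : Forall2 (derivn (fracture n a Gs R Hp)
                  (fun G0 => exists k1, 0 <= k1 /\ derivn pw (fun G1 => In G1 prems) k1 G0))
                  (map (fun _ => 0) prems') prems').
  { unfold prems'. apply F2_lemma. intros P HP. constructor.
    destruct (pw_lemma (fun G1 => In G1 prems) P Lall) as [k Hk]; auto.
    exists k; split; [lia|auto]. }
  pose proof (derivn_step _ Hfr HF2) as Hd.
  match goal with |- exists k, _ /\ derivn _ ?B k C =>
    destruct (horn_lemma Hp C Lall Hg HV B 0) as [k Hk] end.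
  { apply derivn_base. cbv beta. eexists; split; [|exact Hd]. lia. }
  exists k; split; [lia|exact Hk].
Qed.
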